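(* Let $f:[0,1]\times\mathbb{R}^4\to\mathbb{R}$ be continuous, and suppose there exists a constant $M>0$ such that $|f(x,u,y,v,z)|\le \frac{M}{2}$ for all $(x,u,y,v,z)\in\mathcal{D}_M$, where $$\mathcal{D}_M=\Big\{(x,u,y,v,z)\;:\;0\le x\le 1,\ |u|\le \tfrac{M}{384},\ |y|\le \tfrac{M}{72\sqrt3},\ |v|\le M,\ |z|\le M\Big\}.$$ Assume further that there exist constants $K_1,K_2,K_3,K_4\ge 0$ such that $$|f(x,u_2,y_2,v_2,z_2)-f(x,u_1,y_1,v_1,z_1)|\le K_1|u_2-u_1|+K_2|y_2-y_1|+K_3|v_2-v_1|+K_4|z_2-z_1|$$ for all $(x,u_i,y_i,v_i,z_i)\in\mathcal{D}_M$ $(i=1,2)$, and that $$q=\frac{K_1}{384}+\frac{K_2}{72\sqrt3}+K_3+K_4<\frac12 .$$ Then the boundary value problem $$u^{(4)}(x)=f(x,u(x),u'(x),u''(x),u'''(x)),\quad 0<x<1,\qquad u(0)=u(1)=0,\quad u'(0)=u'(1)=0,$$ has a unique solution $u$, and $$\|u\|_\infty\le \frac{M}{384},\quad \|u'\|_\infty\le \frac{M}{72\sqrt3},\quad \|u''\|_\infty\le M,\quad \|u'''\|_\infty\le M.$$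
   Context: A solution means a function $u\in C^4[0,1]$ satisfying the differential equation on $(0,1)$ and the boundary conditions. $\|g\|_\infty=\max_{x\in[0,1]}|g(x)|$. *)

(* Defs.v *)
From Stdlib Require Import Reals.
Open Scope R_scope.

Definition I01 (x : R) : Prop := 0 <= x <= 1.

Definition has_deriv_I01 (g : R -> R) (x l : R) : Prop :=
  forall eps, 0 < eps -> exists delta, 0 < delta /\
    forall y, I01 y -> y <> x -> Rabs (y - x) < delta ->
      Rabs ((g y - g x) / (y - x) - l) < eps.

Definition cont_I01 (g : R -> R) (x : R) : Prop :=
  forall eps, 0 < eps -> exists delta, 0 < delta /\
    forall y, I01 y -> Rabs (y - x) < delta -> Rabs (g y - g x) < eps.

Definition C4_I01 (u u1 u2 u3 u4 : R -> R) : Prop :=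
  forall x, I01 x ->
    has_deriv_I01 u x (u1 x) /\ has_deriv_I01 u1 x (u2 x) /\
    has_deriv_I01 u2 x (u3 x) /\ has_deriv_I01 u3 x (u4 x) /\
    cont_I01 u4 x.

Definition cont_f (f : R -> R -> R -> R -> R -> R) : Prop :=
  forall x u y v z, I01 x -> forall eps, 0 < eps -> exists delta, 0 < delta /\
    forall x' u' y' v' z', I01 x' ->
      Rabs (x' - x) < delta -> Rabs (u' - u) < delta -> Rabs (y' - y) < delta ->
      Rabs (v' - v) < delta -> Rabs (z' - z) < delta ->
      Rabs (f x' u' y' v' z' - f x u y v z) < eps.

Definition DM (M x u y v z : R) : Prop :=
  0 <= x <= 1 /\ Rabs u <= M / 384 /\ Rabs y <= M / (72 * sqrt 3) /\
  Rabs v <= M /\ Rabs z <= M.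

Definition is_solution (f : R -> R -> R -> R -> R -> R)
    (u u1 u2 u3 u4 : R -> R) : Prop :=
  C4_I01 u u1 u2 u3 u4 /\
  (forall x, 0 < x < 1 -> u4 x = f x (u x) (u1 x) (u2 x) (u3 x)) /\
  u 0 = 0 /\ u 1 = 0 /\ u1 0 = 0 /\ u1 1 = 0.

Definition sol_bounds (M : R) (u u1 u2 u3 : R -> R) : Prop :=
  forall x, I01 x ->
    Rabs (u x) <= M / 384 /\ Rabs (u1 x) <= M / (72 * sqrt 3) /\
    Rabs (u2 x) <= M /\ Rabs (u3 x) <= M.

(* Main.v *)
Require Import Defs.
From Stdlib Require Import Reals Lra Lia Psatz FunctionalExtensionality.
From Coquelicot Require Import Coquelicot.
Open Scope R_scope.

Definition ctn (g : R -> R) := forall x eps, 0 < eps -> exists delta, 0 < delta /\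
  forall y, Rabs (y - x) < delta -> Rabs (g y - g x) < eps.

Lemma ctn_continuous g x : ctn g -> continuous g x.
Proof.
  intros H. apply continuity_pt_filterlim.
  intros eps Heps. destruct (H x eps Heps) as [d [Hd Hy]].
  exists d; split; auto. intros y [_ Hy']. apply Hy. exact Hy'.
Qed.

Lemma continuous_ctn g : (forall x, continuous g x) -> ctn g.
Proof.
  intros H x eps Heps. pose proof (proj2 (continuity_pt_filterlim g x) (H x)) as C.
  destruct (C eps Heps) as [d [Hd Hy]].
  exists d; split; auto. intros y Hyx. 
  destruct (Req_dec y x) as [->|Hne]. rewrite Rminus_eq_0, Rabs_R0; auto.
  apply (Hy y). split. unfold D_x, no_cond; auto. exact Hyx.
Qed.

Lemma derive_ctn (g dg : R -> R) : (forall x, is_derive g x (dg x)) -> ctn g.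
Proof.
  intros H. apply continuous_ctn. intros x. apply (ex_derive_continuous (V:=R_NormedModule)). exists (dg x). auto.
Qed.

Lemma norm_R (x : R) : norm x = Rabs x.
Proof. reflexivity. Qed.
Lemma scal_R (a x : R) : scal a x = a * x.
Proof. reflexivity. Qed.
Lemma minus_R (a x : R) : minus a x = a - x.
Proof. reflexivity. Qed.
Lemma plus_R (a x : R) : plus a x = a + x.
Proof. reflexivity. Qed.

Definition clamp x := Rmax 0 (Rmin 1 x).
Lemma clamp_I01 x : I01 (clamp x).
Proof. unfold clamp, I01, Rmax, Rmin. repeat destruct Rle_dec; lra. Qed.
Lemma clamp_id x : I01 x -> clamp x = x.
Proof. unfold clamp, I01, Rmax, Rmin. repeat destruct Rle_dec; lra. Qed.
Lemma clamp_lip x y : Rabs (clamp y - clamp x) <= Rabs (y - x).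
Proof. unfold clamp, Rmax, Rmin. repeat destruct Rle_dec; unfold Rabs; repeat destruct Rcase_abs; lra. Qed.

Lemma ctn_clamp_comp g : (forall x, I01 x -> cont_I01 g x) -> ctn (fun t => g (clamp t)).
Proof.
  intros H x eps Heps. destruct (H (clamp x) (clamp_I01 x) eps Heps) as [d [Hd Hy]].
  exists d; split; auto. intros y Hyx. apply Hy. apply clamp_I01.
  eapply Rle_lt_trans. apply clamp_lip. auto.
Qed.

Lemma deriv_cont g x l : has_deriv_I01 g x l -> cont_I01 g x.
Proof.
  intros H eps Heps.
  destruct (H 1 Rlt_0_1) as [d [Hd Hy]].
  exists (Rmin d (eps / (Rabs l + 1))). split.
  { apply Rmin_pos; auto. apply Rdiv_lt_0_compat; auto. pose proof (Rabs_pos l); lra. }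
  intros y Iy Hyx.
  destruct (Req_dec y x) as [->|Hne]. rewrite Rminus_eq_0, Rabs_R0; auto.
  assert (Hq := Hy y Iy Hne (Rlt_le_trans _ _ _ Hyx (Rmin_l _ _))).
  assert (Hyx2 := Rlt_le_trans _ _ _ Hyx (Rmin_r _ _)).
  assert (Hyx0 : y - x <> 0) by lra.
  replace (g y - g x) with ((g y - g x) / (y - x) * (y - x)) by (field; auto).
  rewrite Rabs_mult.
  assert (Rabs ((g y - g x) / (y - x)) <= Rabs l + 1).
  { pose proof (Rabs_triang_inv ((g y - g x) / (y - x)) l). lra. }
  assert (0 < Rabs l + 1) by (pose proof (Rabs_pos l); lra).
  apply Rle_lt_trans with ((Rabs l + 1) * Rabs (y - x)).
  apply Rmult_le_compat_r; auto. apply Rabs_pos.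
  apply Rmult_lt_reg_l with (/ (Rabs l + 1)). apply Rinv_0_lt_compat; auto.
  rewrite <- Rmult_assoc, Rinv_l by lra. rewrite Rmult_1_l.
  unfold Rdiv in Hyx2. lra.
Qed.

Lemma is_derive_hd g x l : is_derive g x l -> has_deriv_I01 g x l.
Proof.
  intros H. apply is_derive_Reals in H.
  intros eps Heps. destruct (H eps Heps) as [d Hd].
  exists d. split. apply cond_pos.
  intros y _ Hne Hyx.
  replace y with (x + (y - x)) at 1 by ring.
  apply Hd. lra. auto.
Qed.

Lemma hd_derivable g x l : 0 < x < 1 -> has_deriv_I01 g x l -> is_derive g x l.
Proof.
  intros Hx H. apply is_derive_Reals.
  intros eps Heps. destruct (H eps Heps) as [d [Hd Hy]].
  assert (Hp : 0 < Rmin d (Rmin x (1 - x))) by (repeat apply Rmin_pos; lra).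
  exists (mkposreal _ Hp). intros h Hh Hhd. simpl in Hhd.
  assert (Rabs h < d) by (eapply Rlt_le_trans; [exact Hhd|apply Rmin_l]).
  assert (Rabs h < Rmin x (1-x)) by (eapply Rlt_le_trans; [exact Hhd|apply Rmin_r]).
  assert (Rabs h < x) by (eapply Rlt_le_trans; [exact H1|apply Rmin_l]).
  assert (Rabs h < 1 - x) by (eapply Rlt_le_trans; [exact H1|apply Rmin_r]).
  assert (Hr := Hy (x + h)). replace (x + h - x) with h in Hr by ring.
  apply Hr. unfold I01. unfold Rabs in *; destruct Rcase_abs; lra.
  lra. auto.
Qed.

Definition Mom (k : nat) (ph : R -> R) (a b : R) : R := RInt (fun t => t ^ k * ph t) a b.

Lemma ctn_powmul k ph x : ctn ph -> continuous (fun t => t ^ k * ph t) x.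
Proof.
  intros H. apply (continuous_mult (K:=R_AbsRing) (fun t => t ^ k) ph).
  apply (ex_derive_continuous (V:=R_NormedModule)). auto_derive. auto.
  apply ctn_continuous; auto.
Qed.

Lemma Mom_is k ph a b : ctn ph -> is_RInt (fun t => t ^ k * ph t) a b (Mom k ph a b).
Proof.
  intros H. apply (RInt_correct (V:=R_CompleteNormedModule)).
  apply (ex_RInt_continuous (V:=R_CompleteNormedModule)). intros; apply ctn_powmul; auto.
Qed.

Lemma Mom_chasles k ph x : ctn ph -> Mom k ph x 1 = Mom k ph 0 1 - Mom k ph 0 x.
Proof.
  intros H.
  assert (E := is_RInt_Chasles _ _ _ _ _ _ (Mom_is k ph 0 x H) (Mom_is k ph x 1 H)).
  assert (E2 := is_RInt_unique _ _ _ _ E).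
  assert (E3 : Mom k ph 0 1 = Mom k ph 0 x + Mom k ph x 1).
  { unfold Mom at 1. rewrite E2. reflexivity. }
  lra.
Qed.

Lemma Mom_deriv k ph x : ctn ph -> is_derive (fun y => Mom k ph 0 y) x (x ^ k * ph x).
Proof.
  intros H. apply (is_derive_RInt (V:=R_NormedModule) (fun t => t ^ k * ph t) (fun y => Mom k ph 0 y) 0).
  apply filter_forall. intros; apply Mom_is; auto.
  apply ctn_powmul; auto.
Qed.

Lemma Mom_0 k ph : Mom k ph 0 0 = 0.
Proof. unfold Mom. rewrite RInt_point. reflexivity. Qed.

Definition Imom k ph x := Mom k ph 0 x.
Definition Jmom k ph := Mom k ph 0 1.
Definition C2 ph := Jmom 1 ph - 2 * Jmom 2 ph + Jmom 3 ph.
Definition C3 ph := Jmom 0 ph - 3 * Jmom 2 ph + 2 * Jmom 3 ph.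

Definition U0 ph x := (x^3 * Imom 0 ph x - 3 * x^2 * Imom 1 ph x + 3 * x * Imom 2 ph x - Imom 3 ph x) / 6
  + x^2 / 2 * C2 ph - x^3 / 6 * C3 ph.
Definition U1 ph x := (x^2 * Imom 0 ph x - 2 * x * Imom 1 ph x + Imom 2 ph x) / 2 + x * C2 ph - x^2 / 2 * C3 ph.
Definition U2 ph x := x * Imom 0 ph x - Imom 1 ph x + C2 ph - x * C3 ph.
Definition U3 ph x := Imom 0 ph x - C3 ph.

Lemma I_deriv k ph x : ctn ph -> is_derive (Imom k ph) x (x ^ k * ph x).
Proof. apply Mom_deriv. Qed.

Lemma U0_deriv ph (x : R) : ctn ph -> is_derive (U0 ph) x (U1 ph x).
Proof.
  intros H. 
  assert (E : forall k, Derive (Imom k ph) x = x ^ k * ph x) by (intros; apply is_derive_unique, I_deriv; auto).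
  assert (Ex : forall k, ex_derive (Imom k ph) x) by (intros; eexists; apply I_deriv; auto).
  unfold U0. auto_derive. repeat split; auto.
  rewrite !E. unfold U1. simpl. field.
Qed.

Lemma U1_deriv ph (x : R) : ctn ph -> is_derive (U1 ph) x (U2 ph x).
Proof.
  intros H. 
  assert (E : forall k, Derive (Imom k ph) x = x ^ k * ph x) by (intros; apply is_derive_unique, I_deriv; auto).
  assert (Ex : forall k, ex_derive (Imom k ph) x) by (intros; eexists; apply I_deriv; auto).
  unfold U1. auto_derive. repeat split; auto.
  rewrite !E. unfold U2. simpl. field.
Qed.

Lemma U2_deriv ph (x : R) : ctn ph -> is_derive (U2 ph) x (U3 ph x).
Proof.
  intros H. 
  assert (E : forall k, Derive (Imom k ph) x = x ^ k * ph x) by (intros; apply is_derive_unique, I_deriv; auto).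
  assert (Ex : forall k, ex_derive (Imom k ph) x) by (intros; eexists; apply I_deriv; auto).
  unfold U2. auto_derive. repeat split; auto.
  rewrite !E. unfold U3. simpl. field.
Qed.

Lemma U3_deriv ph (x : R) : ctn ph -> is_derive (U3 ph) x (ph x).
Proof.
  intros H. 
  assert (E : forall k, Derive (Imom k ph) x = x ^ k * ph x) by (intros; apply is_derive_unique, I_deriv; auto).
  assert (Ex : forall k, ex_derive (Imom k ph) x) by (intros; eexists; apply I_deriv; auto).
  unfold U3. auto_derive. repeat split; auto.
  rewrite !E. simpl. field.
Qed.

Lemma U0_at0 ph : U0 ph 0 = 0.
Proof. unfold U0, Imom. rewrite !Mom_0. field. Qed.
Lemma U1_at0 ph : U1 ph 0 = 0.
Proof. unfold U1, Imom. rewrite !Mom_0. field. Qed.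
Lemma U0_at1 ph : U0 ph 1 = 0.
Proof. unfold U0, Imom, C2, C3, Jmom. field. Qed.
Lemma U1_at1 ph : U1 ph 1 = 0.
Proof. unfold U1, Imom, C2, C3, Jmom. field. Qed.

Lemma is_RInt_eqv (g : R -> R) a b l l' : is_RInt g a b l -> l = l' -> is_RInt g a b l'.
Proof. intros H ->; auto. Qed.

Lemma polyInt ph a b c0 c1 c2 c3 : ctn ph ->
  is_RInt (fun t => (c0 + c1 * t + c2 * t ^ 2 + c3 * t ^ 3) * ph t) a b
    (c0 * Mom 0 ph a b + c1 * Mom 1 ph a b + c2 * Mom 2 ph a b + c3 * Mom 3 ph a b).
Proof.
  intros H.
  pose proof (is_RInt_plus _ _ _ _ _ _
    (is_RInt_plus _ _ _ _ _ _
      (is_RInt_plus _ _ _ _ _ _ (is_RInt_scal _ _ _ c0 _ (Mom_is 0 ph a b H))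
                                (is_RInt_scal _ _ _ c1 _ (Mom_is 1 ph a b H)))
      (is_RInt_scal _ _ _ c2 _ (Mom_is 2 ph a b H)))
    (is_RInt_scal _ _ _ c3 _ (Mom_is 3 ph a b H))) as P.
  eapply is_RInt_ext; [| exact P].
  intros t _. unfold plus, scal; simpl. unfold mult; simpl. ring.
Qed.

Lemma int_bound (g bnd : R -> R) (a b P B : R) : a <= b ->
  (forall t, a <= t <= b -> Rabs (g t) <= bnd t) -> is_RInt g a b P -> is_RInt bnd a b B ->
  Rabs P <= B.
Proof.
  intros Hab Hb HP HB. rewrite <- norm_R.
  apply (norm_RInt_le g bnd a b P B Hab); auto.
Qed.

Lemma kbound (k chi : R -> R) (beta : R -> R) (d a b P B : R) :
  a <= b -> (forall t, a <= t <= b -> Rabs (k t) <= beta t) ->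
  (forall t, a <= t <= b -> Rabs (chi t) <= d) ->
  is_RInt (fun t => k t * chi t) a b P -> is_RInt (fun t => beta t * d) a b B ->
  Rabs P <= B.
Proof.
  intros Hab Hk Hc HP HB. apply (int_bound (fun t => k t * chi t) (fun t => beta t * d) a b P B); auto.
  intros t Ht. rewrite Rabs_mult. apply Rmult_le_compat; auto using Rabs_pos.
Qed.

Lemma is_RInt_poly (F f : R -> R) a b :
  (forall t, is_derive F t (f t)) -> (forall t, continuous f t) -> is_RInt f a b (F b - F a).
Proof.
  intros HF Hf. apply (is_RInt_derive (V:=R_CompleteNormedModule) F f a b); auto.
Qed.

Lemma is_RInt_cst (c a b : R) : is_RInt (fun _ => c) a b ((b - a) * c).
Proof. apply (is_RInt_const (V:=R_NormedModule)). Qed.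

Lemma rep_gen (A B : R -> R -> R) (U : (R -> R) -> R -> R) ph x a0 a1 a2 a3 b0 b1 b2 b3 :
  ctn ph ->
  (forall t, A x t = a0 + a1 * t + a2 * t ^ 2 + a3 * t ^ 3) ->
  (forall t, B x t = b0 + b1 * t + b2 * t ^ 2 + b3 * t ^ 3) ->
  U ph x = a0 * Imom 0 ph x + a1 * Imom 1 ph x + a2 * Imom 2 ph x + a3 * Imom 3 ph x
         + b0 * (Jmom 0 ph - Imom 0 ph x) + b1 * (Jmom 1 ph - Imom 1 ph x)
         + b2 * (Jmom 2 ph - Imom 2 ph x) + b3 * (Jmom 3 ph - Imom 3 ph x) ->
  exists P Q, is_RInt (fun t => A x t * ph t) 0 x P /\
              is_RInt (fun t => B x t * ph t) x 1 Q /\ U ph x = P + Q.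
Proof.
  intros H HA HB HU.
  eexists; eexists; split; [|split].
  - eapply is_RInt_ext; [| apply (polyInt ph 0 x a0 a1 a2 a3 H)].
    intros t _. rewrite HA. reflexivity.
  - eapply is_RInt_ext; [| apply (polyInt ph x 1 b0 b1 b2 b3 H)].
    intros t _. rewrite HB. reflexivity.
  - rewrite HU. rewrite (Mom_chasles 0 ph x H), (Mom_chasles 1 ph x H), (Mom_chasles 2 ph x H), (Mom_chasles 3 ph x H). unfold Imom, Jmom. ring.
Qed.

Definition A0 x t := t^2 * (1-x)^2 * (3*x - t - 2*t*x) / 6.
Definition B0 x t := x^2 * (1-t)^2 * (3*t - x - 2*x*t) / 6.
Definition A1 x t := t^2 * (1-x) * (1 - 3*x + 2*t*x) / 2.
Definition B1 x t := x * (1-t)^2 * (2*t - x - 2*x*t) / 2.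
Definition A2 x t := t^2 * (3*x - 2*t*x + t - 2).
Definition B2 x t := (1-t)^2 * (t - x - 2*x*t).
Definition A3 (x t : R) := t^2 * (3 - 2*t).
Definition B3 (x t : R) := - (1 - 3*t^2 + 2*t^3).

Lemma rep0 ph x : ctn ph -> exists P Q, is_RInt (fun t => A0 x t * ph t) 0 x P /\
  is_RInt (fun t => B0 x t * ph t) x 1 Q /\ U0 ph x = P + Q.
Proof.
  intros H. apply (rep_gen A0 B0 U0 ph x 0 0 (x/2 - x^2 + x^3/2) (-1/6 + x^2/2 - x^3/3)
    (-x^3/6) (x^2/2) (-x^2 + x^3/2) (x^2/2 - x^3/3) H).
  intros; unfold A0; field. intros; unfold B0; field.
  unfold U0, C2, C3; field.
Qed.

Lemma rep1 ph x : ctn ph -> exists P Q, is_RInt (fun t => A1 x t * ph t) 0 x P /\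
  is_RInt (fun t => B1 x t * ph t) x 1 Q /\ U1 ph x = P + Q.
Proof.
  intros H. apply (rep_gen A1 B1 U1 ph x 0 0 (1/2 - 2*x + 3*x^2/2) (x - x^2)
    (-x^2/2) x (-2*x + 3*x^2/2) (x - x^2) H).
  intros; unfold A1; field. intros; unfold B1; field.
  unfold U1, C2, C3; field.
Qed.

Lemma rep2 ph x : ctn ph -> exists P Q, is_RInt (fun t => A2 x t * ph t) 0 x P /\
  is_RInt (fun t => B2 x t * ph t) x 1 Q /\ U2 ph x = P + Q.
Proof.
  intros H. apply (rep_gen A2 B2 U2 ph x 0 0 (-2 + 3*x) (1 - 2*x)
    (-x) 1 (-2 + 3*x) (1 - 2*x) H).
  intros; unfold A2; ring. intros; unfold B2; ring.
  unfold U2, C2, C3; ring.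
Qed.

Lemma rep3 ph x : ctn ph -> exists P Q, is_RInt (fun t => A3 x t * ph t) 0 x P /\
  is_RInt (fun t => B3 x t * ph t) x 1 Q /\ U3 ph x = P + Q.
Proof.
  intros H. apply (rep_gen A3 B3 U3 ph x 0 0 3 (-2) (-1) 0 3 (-2) H).
  intros; unfold A3; ring. intros; unfold B3; ring.
  unfold U3, C2, C3; ring.
Qed.

Lemma poly_rint (F f : R -> R) a b :
  (forall t, is_derive F t (f t)) -> (forall t, ex_derive f t) -> is_RInt f a b (F b - F a).
Proof.
  intros HF Hf. apply is_RInt_poly; auto.
  intros t. apply (ex_derive_continuous (V:=R_NormedModule)). auto.
Qed.

Lemma Rabs_le_b a b : - b <= a <= b -> Rabs a <= b.
Proof. intros. apply Rabs_le. lra. Qed.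

Lemma bnd3 (x : R) (chi : R -> R) (P Q d : R) : 0 <= x <= 1 -> (forall t, 0 <= t <= 1 -> Rabs (chi t) <= d) ->
  is_RInt (fun t => A3 x t * chi t) 0 x P -> is_RInt (fun t => B3 x t * chi t) x 1 Q ->
  Rabs (P + Q) <= 1 * d.
Proof.
  intros Hx Hc HP HQ.
  assert (E1 : Rabs P <= (x - 0) * (1 * d)).
  { apply (kbound (A3 x) chi (fun _ => 1) d 0 x P); auto; try lra.
    - intros t Ht. cbv beta. unfold A3. apply Rabs_le_b.
      assert (0 <= (1-t)^2*(1+2*t)) by (apply Rmult_le_pos; nra).
      assert (0 <= t^2*(3-2*t)) by (apply Rmult_le_pos; nra). split; lra.
    - intros t Ht. apply Hc. lra.
    - apply is_RInt_cst. }
  assert (E2 : Rabs Q <= (1 - x) * (1 * d)).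
  { apply (kbound (B3 x) chi (fun _ => 1) d x 1 Q); auto; try lra.
    - intros t Ht. cbv beta. unfold B3. apply Rabs_le_b.
      assert (0 <= (1-t)^2*(1+2*t)) by (apply Rmult_le_pos; nra).
      assert (0 <= t^2*(3-2*t)) by (apply Rmult_le_pos; nra). split; lra.
    - intros t Ht. apply Hc. lra.
    - apply is_RInt_cst. }
  pose proof (Rabs_triang P Q). nra.
Qed.

Lemma bnd2 (x : R) (chi : R -> R) (P Q d : R) : 0 <= x <= 1 -> (forall t, 0 <= t <= 1 -> Rabs (chi t) <= d) ->
  is_RInt (fun t => A2 x t * chi t) 0 x P -> is_RInt (fun t => B2 x t * chi t) x 1 Q ->
  Rabs (P + Q) <= 2 * d.
Proof.
  intros Hx Hc HP HQ.
  assert (E1 : Rabs P <= (x - 0) * (2 * d)).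
  { apply (kbound (A2 x) chi (fun _ => 2) d 0 x P); auto; try lra.
    - intros t Ht. cbv beta. unfold A2. apply Rabs_le_b.
      assert (0 <= (1-x)*(3-2*t)) by (apply Rmult_le_pos; lra).
      assert (0 <= x*(3-2*t)) by (apply Rmult_le_pos; lra).
      assert (0 <= t^2*(3*x - 2*t*x + t - 2 + 2)) by (apply Rmult_le_pos; nra).
      assert (0 <= t^2*(1 - (3*x - 2*t*x + t - 2))) by (apply Rmult_le_pos; nra).
      assert (0 <= t*(1-t)) by (apply Rmult_le_pos; lra).
      split; nra.
    - intros t Ht. apply Hc. lra.
    - apply is_RInt_cst. }
  assert (E2 : Rabs Q <= (1 - x) * (2 * d)).
  { apply (kbound (B2 x) chi (fun _ => 2) d x 1 Q); auto; try lra.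
    - intros t Ht. cbv beta. unfold B2. apply Rabs_le_b.
      assert (0 <= (1-x)*t) by (apply Rmult_le_pos; lra).
      assert (0 <= x*t) by (apply Rmult_le_pos; lra).
      assert (0 <= (1-t)^2*(t - x - 2*x*t + 2)) by (apply Rmult_le_pos; nra).
      assert (0 <= (1-t)^2*(1 - (t - x - 2*x*t))) by (apply Rmult_le_pos; nra).
      assert (0 <= t*(2-t)) by (apply Rmult_le_pos; lra).
      split; nra.
    - intros t Ht. apply Hc. lra.
    - apply is_RInt_cst. }
  pose proof (Rabs_triang P Q).
  assert (0 <= d) by (pose proof (Hc 0 ltac:(lra)); pose proof (Rabs_pos (chi 0)); lra).
  nra.
Qed.

Lemma bnd0 (x : R) (chi : R -> R) (P Q d : R) : 0 <= x <= 1 -> (forall t, 0 <= t <= 1 -> Rabs (chi t) <= d) ->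
  is_RInt (fun t => A0 x t * chi t) 0 x P -> is_RInt (fun t => B0 x t * chi t) x 1 Q ->
  Rabs (P + Q) <= d / 384.
Proof.
  intros Hx Hc HP HQ.
  assert (E1 : Rabs P <= ((1-x)^2/6 * (x*x^3 - (1+2*x)*x^4/4) * d) - ((1-x)^2/6 * (x*0^3 - (1+2*x)*0^4/4) * d)).
  { apply (kbound (A0 x) chi (A0 x) d 0 x P); auto; try lra.
    - intros t Ht. cbv beta. unfold A0. apply Rabs_le_b.
      assert (0 <= (x-t)*(3-2*t)) by (apply Rmult_le_pos; lra).
      assert (0 <= t*(1-t)) by (apply Rmult_le_pos; lra).
      assert (0 <= t^2 * (1-x)^2 * (3*x - t - 2*t*x)) by (repeat apply Rmult_le_pos; nra).
      split; lra.
    - intros t Ht. apply Hc. lra.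
    - apply (poly_rint (fun t => (1-x)^2/6 * (x*t^3 - (1+2*x)*t^4/4) * d)).
      + intros t. auto_derive; auto. unfold A0. field.
      + intros t. unfold A0. auto_derive. auto. }
  assert (E2 : Rabs Q <= (-x^2/6 * ((3-3*x)*(1-1)^3/3 - (3-2*x)*(1-1)^4/4) * d)
                       - (-x^2/6 * ((3-3*x)*(1-x)^3/3 - (3-2*x)*(1-x)^4/4) * d)).
  { apply (kbound (B0 x) chi (B0 x) d x 1 Q); auto; try lra.
    - intros t Ht. cbv beta. unfold B0. apply Rabs_le_b.
      assert (0 <= (t-x)*(1+2*t)) by (apply Rmult_le_pos; lra).
      assert (0 <= t*(1-t)) by (apply Rmult_le_pos; lra).
      assert (0 <= x^2 * (1-t)^2 * (3*t - x - 2*x*t)) by (repeat apply Rmult_le_pos; nra).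
      split; lra.
    - intros t Ht. apply Hc. lra.
    - apply (poly_rint (fun t => -x^2/6 * ((3-3*x)*(1-t)^3/3 - (3-2*x)*(1-t)^4/4) * d)).
      + intros t. auto_derive; auto. unfold B0. field.
      + intros t. unfold B0. auto_derive. auto. }
  pose proof (Rabs_triang P Q).
  assert (0 <= d) by (pose proof (Hc 0 ltac:(lra)); pose proof (Rabs_pos (chi 0)); lra).
  assert (Hs : Rabs (P + Q) <= d * (x^2 * (1-x)^2 / 24)).
  { eapply Rle_trans. exact H. eapply Rle_trans. apply Rplus_le_compat; [exact E1|exact E2].
    right. field. }
  assert (0 <= x * (1-x)) by (apply Rmult_le_pos; lra).
  assert (x * (1-x) <= 1/4) by (assert (0 <= (x - 1/2)^2) by (apply pow2_ge_0); lra).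
  assert (x^2 * (1-x)^2 <= 1/16).
  { replace (x^2 * (1-x)^2) with ((x*(1-x))*(x*(1-x))) by ring.
    assert ((x*(1-x))*(x*(1-x)) <= (1/4)*(x*(1-x))) by (apply Rmult_le_compat_r; lra). lra. }
  assert (d * (x^2 * (1-x)^2 / 24) <= d * (1/16/24)) by (apply Rmult_le_compat_l; lra).
  lra.
Qed.
Lemma S1_piece y a b : 0 <= a <= y -> y <= b -> b <= 1/2 ->
  y*(1-y)*((1-2*y) + y^3*(4-3*y)) <= b*(1-b)*((1-2*a) + b^3*(4-3*a)).
Proof.
  intros Ha Hy Hb.
  assert (0 <= (b - y)*(1 - b - y)) by (apply Rmult_le_pos; lra).
  assert (0 <= y*(1-y)) by (apply Rmult_le_pos; lra).
  assert (0 <= y^3) by (apply pow_le; lra).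
  assert (y^3 <= b^3) by (apply pow_incr; lra).
  assert (y^3*(4-3*y) <= b^3*(4-3*a)) by (apply Rmult_le_compat; lra).
  assert (0 <= y^3*(4-3*y)) by (apply Rmult_le_pos; lra).
  apply Rmult_le_compat; lra.
Qed.
Lemma S1_le y : 0 <= y <= 1/2 ->
  y^3*(1-y)^2/6 + y/2*((2-3*y)*(1-y)^3/3-(1-y)^5/2) <= 1/64.
Proof.
  intros Hy.
  replace (y^3*(1-y)^2/6 + y/2*((2-3*y)*(1-y)^3/3-(1-y)^5/2))
    with (y*(1-y)*((1-2*y) + y^3*(4-3*y))/12) by field.
  destruct (Rle_dec y (1/8)).
  { pose proof (S1_piece y 0 (1/8)). lra. }
  destruct (Rle_dec y (1/4)).
  { pose proof (S1_piece y (1/8) (1/4)). lra. }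
  destruct (Rle_dec y (3/8)).
  { pose proof (S1_piece y (1/4) (3/8)). lra. }
  pose proof (S1_piece y (3/8) (1/2)). lra.
Qed.

Lemma bnd1 (x : R) (chi : R -> R) (P Q d : R) : 0 <= x <= 1 -> (forall t, 0 <= t <= 1 -> Rabs (chi t) <= d) ->
  is_RInt (fun t => A1 x t * chi t) 0 x P -> is_RInt (fun t => B1 x t * chi t) x 1 Q ->
  Rabs (P + Q) <= d / 64.
Proof.
  intros Hx Hc HP HQ.
  pose proof (Rabs_triang P Q).
  assert (0 <= d) by (pose proof (Hc 0 ltac:(lra)); pose proof (Rabs_pos (chi 0)); lra).
  destruct (Rle_dec x (1/2)) as [Hh|Hh].
  - assert (E1 : Rabs P <= (x^3*(1-x)^2/6 * d) - (0^3*(1-x)^2/6 * d)).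
    { apply (kbound (A1 x) chi (fun t => t^2*(1-x)^2/2) d 0 x P); auto; try lra.
      - intros t Ht. cbv beta. unfold A1. apply Rabs_le_b.
        assert (0 <= t^2*(1-x)*(2*x*(1-t))) by (repeat apply Rmult_le_pos; nra).
        assert (0 <= t^2*(1-x)*(2*(1-2*x)+2*t*x)) by (repeat apply Rmult_le_pos; nra).
        split; lra.
      - intros t Ht. apply Hc. lra.
      - apply (poly_rint (fun t => t^3*(1-x)^2/6 * d)).
        + intros t. auto_derive; auto. field.
        + intros t. auto_derive. auto. }
    assert (E2 : Rabs Q <= (-x/2*((2-3*x)*(1-1)^3/3 - (2-2*x)*(1-1)^4/4) * d)
                         - (-x/2*((2-3*x)*(1-x)^3/3 - (2-2*x)*(1-x)^4/4) * d)).
    { apply (kbound (B1 x) chi (B1 x) d x 1 Q); auto; try lra.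
      - intros t Ht. cbv beta. unfold B1. apply Rabs_le_b.
        assert (0 <= x*(1-t)^2*(2*(t-x)*(1-x) + x*(1-2*x))) by (repeat apply Rmult_le_pos; nra).
        split; lra.
      - intros t Ht. apply Hc. lra.
      - apply (poly_rint (fun t => -x/2*((2-3*x)*(1-t)^3/3 - (2-2*x)*(1-t)^4/4) * d)).
        + intros t. auto_derive; auto. unfold B1. field.
        + intros t. unfold B1. auto_derive. auto. }
    assert (S := S1_le x ltac:(lra)).
    assert (Hs : Rabs (P + Q) <= d * (x^3*(1-x)^2/6 + x/2*((2-3*x)*(1-x)^3/3-(1-x)^5/2))).
    { eapply Rle_trans. exact H. eapply Rle_trans. apply Rplus_le_compat; [exact E1|exact E2].
      right. field. }
    assert (d * (x^3*(1-x)^2/6 + x/2*((2-3*x)*(1-x)^3/3-(1-x)^5/2)) <= d * (1/64))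
      by (apply Rmult_le_compat_l; lra).
    lra.
  - assert (E1 : Rabs P <= ((1-x)/2*((3*x-1)*x^3/3 - x*x^4/2) * d) - ((1-x)/2*((3*x-1)*0^3/3 - x*0^4/2) * d)).
    { apply (kbound (A1 x) chi (fun t => - A1 x t) d 0 x P); auto; try lra.
      - intros t Ht. cbv beta. unfold A1.
        assert (0 <= t^2*(1-x)*(2*x*(x-t) + (2*x-1)*(1-x))) by (repeat apply Rmult_le_pos; nra).
        rewrite Rabs_left1; lra.
      - intros t Ht. apply Hc. lra.
      - apply (poly_rint (fun t => (1-x)/2*((3*x-1)*t^3/3 - x*t^4/2) * d)).
        + intros t. auto_derive; auto. unfold A1. field.
        + intros t. unfold A1. auto_derive. auto. }
    assert (E2 : Rabs Q <= (-x^2*(1-1)^3/6 * d) - (-x^2*(1-x)^3/6 * d)).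
    { apply (kbound (B1 x) chi (fun t => x^2*(1-t)^2/2) d x 1 Q); auto; try lra.
      - intros t Ht. cbv beta. unfold B1. apply Rabs_le_b.
        assert (0 <= x*(1-t)^2*(2*(2*x-1) + 2*(1-t)*(1-x))) by (repeat apply Rmult_le_pos; nra).
        assert (0 <= x*(1-t)^2*(2*t*(1-x))) by (repeat apply Rmult_le_pos; nra).
        split; lra.
      - intros t Ht. apply Hc. lra.
      - apply (poly_rint (fun t => -x^2*(1-t)^3/6 * d)).
        + intros t. auto_derive; auto. field.
        + intros t. auto_derive. auto. }
    assert (S := S1_le (1-x) ltac:(lra)).
    assert (Hs : Rabs (P + Q) <= d * ((1-x)^3*(1-(1-x))^2/6 + (1-x)/2*((2-3*(1-x))*(1-(1-x))^3/3-(1-(1-x))^5/2))).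
    { eapply Rle_trans. exact H. eapply Rle_trans. apply Rplus_le_compat; [exact E1|exact E2].
      right. field. }
    assert (d * ((1-x)^3*(1-(1-x))^2/6 + (1-x)/2*((2-3*(1-x))*(1-(1-x))^3/3-(1-(1-x))^5/2)) <= d * (1/64))
      by (apply Rmult_le_compat_l; lra).
    lra.
Qed.

Lemma single_gen (A B : R -> R -> R) (U : (R -> R) -> R -> R) (c : R) ph x :
  (exists P Q, is_RInt (fun t => A x t * ph t) 0 x P /\ is_RInt (fun t => B x t * ph t) x 1 Q /\ U ph x = P + Q) ->
  (forall (P Q : R), is_RInt (fun t => A x t * ph t) 0 x P -> is_RInt (fun t => B x t * ph t) x 1 Q -> Rabs (P + Q) <= c) ->
  Rabs (U ph x) <= c.
Proof.
  intros [P [Q [HP [HQ HU]]]] Hb. rewrite HU. apply Hb; auto.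
Qed.

Lemma diff_gen (A B : R -> R -> R) (U : (R -> R) -> R -> R) (c : R) ph ps x :
  (exists P Q, is_RInt (fun t => A x t * ph t) 0 x P /\ is_RInt (fun t => B x t * ph t) x 1 Q /\ U ph x = P + Q) ->
  (exists P Q, is_RInt (fun t => A x t * ps t) 0 x P /\ is_RInt (fun t => B x t * ps t) x 1 Q /\ U ps x = P + Q) ->
  (forall (P Q : R), is_RInt (fun t => A x t * (ph t - ps t)) 0 x P ->
      is_RInt (fun t => B x t * (ph t - ps t)) x 1 Q -> Rabs (P + Q) <= c) ->
  Rabs (U ph x - U ps x) <= c.
Proof.
  intros [P1 [Q1 [HP1 [HQ1 HU1]]]] [P2 [Q2 [HP2 [HQ2 HU2]]]] Hb. rewrite HU1, HU2.
  replace (P1 + Q1 - (P2 + Q2)) with ((P1 - P2) + (Q1 - Q2)) by ring.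
  apply Hb.
  - eapply is_RInt_ext; [| apply (is_RInt_minus _ _ _ _ _ _ HP1 HP2)].
    intros t _. unfold minus, plus, opp; simpl. ring.
  - eapply is_RInt_ext; [| apply (is_RInt_minus _ _ _ _ _ _ HQ1 HQ2)].
    intros t _. unfold minus, plus, opp; simpl. ring.
Qed.

Lemma U0_bound ph d x : ctn ph -> (forall t, 0 <= t <= 1 -> Rabs (ph t) <= d) -> 0 <= x <= 1 ->
  Rabs (U0 ph x) <= d / 384.
Proof. intros H Hd Hx. apply (single_gen A0 B0); [apply rep0; auto|]. intros; eapply bnd0; eauto. Qed.
Lemma U1_bound ph d x : ctn ph -> (forall t, 0 <= t <= 1 -> Rabs (ph t) <= d) -> 0 <= x <= 1 ->
  Rabs (U1 ph x) <= d / 64.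
Proof. intros H Hd Hx. apply (single_gen A1 B1); [apply rep1; auto|]. intros; eapply bnd1; eauto. Qed.
Lemma U2_bound ph d x : ctn ph -> (forall t, 0 <= t <= 1 -> Rabs (ph t) <= d) -> 0 <= x <= 1 ->
  Rabs (U2 ph x) <= 2 * d.
Proof. intros H Hd Hx. apply (single_gen A2 B2); [apply rep2; auto|]. intros; eapply bnd2; eauto. Qed.
Lemma U3_bound ph d x : ctn ph -> (forall t, 0 <= t <= 1 -> Rabs (ph t) <= d) -> 0 <= x <= 1 ->
  Rabs (U3 ph x) <= 1 * d.
Proof. intros H Hd Hx. apply (single_gen A3 B3); [apply rep3; auto|]. intros; eapply bnd3; eauto. Qed.

Lemma U0_diff ph ps d x : ctn ph -> ctn ps -> (forall t, 0 <= t <= 1 -> Rabs (ph t - ps t) <= d) -> 0 <= x <= 1 ->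
  Rabs (U0 ph x - U0 ps x) <= d / 384.
Proof. intros H H' Hd Hx. apply (diff_gen A0 B0); [apply rep0; auto|apply rep0; auto|]. intros; apply (bnd0 x (fun t => ph t - ps t)); auto. Qed.
Lemma U1_diff ph ps d x : ctn ph -> ctn ps -> (forall t, 0 <= t <= 1 -> Rabs (ph t - ps t) <= d) -> 0 <= x <= 1 ->
  Rabs (U1 ph x - U1 ps x) <= d / 64.
Proof. intros H H' Hd Hx. apply (diff_gen A1 B1); [apply rep1; auto|apply rep1; auto|]. intros; apply (bnd1 x (fun t => ph t - ps t)); auto. Qed.
Lemma U2_diff ph ps d x : ctn ph -> ctn ps -> (forall t, 0 <= t <= 1 -> Rabs (ph t - ps t) <= d) -> 0 <= x <= 1 ->
  Rabs (U2 ph x - U2 ps x) <= 2 * d.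
Proof. intros H H' Hd Hx. apply (diff_gen A2 B2); [apply rep2; auto|apply rep2; auto|]. intros; apply (bnd2 x (fun t => ph t - ps t)); auto. Qed.
Lemma U3_diff ph ps d x : ctn ph -> ctn ps -> (forall t, 0 <= t <= 1 -> Rabs (ph t - ps t) <= d) -> 0 <= x <= 1 ->
  Rabs (U3 ph x - U3 ps x) <= 1 * d.
Proof. intros H H' Hd Hx. apply (diff_gen A3 B3); [apply rep3; auto|apply rep3; auto|]. intros; apply (bnd3 x (fun t => ph t - ps t)); auto. Qed.

Definition Tf (f : R -> R -> R -> R -> R -> R) (ph : R -> R) (x : R) : R :=
  f (clamp x) (U0 ph (clamp x)) (U1 ph (clamp x)) (U2 ph (clamp x)) (U3 ph (clamp x)).

Lemma ctn_comp_clamp g : ctn g -> ctn (fun t => g (clamp t)).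
Proof.
  intros H x eps Heps. destruct (H (clamp x) eps Heps) as [d [Hd Hy]].
  exists d; split; auto. intros y Hyx. apply Hy. eapply Rle_lt_trans. apply clamp_lip. auto.
Qed.

Lemma comp_ctn f g1 g2 g3 g4 : cont_f f -> ctn g1 -> ctn g2 -> ctn g3 -> ctn g4 ->
  ctn (fun t => f (clamp t) (g1 t) (g2 t) (g3 t) (g4 t)).
Proof.
  intros Hf H1 H2 H3 H4 x eps Heps.
  destruct (Hf (clamp x) (g1 x) (g2 x) (g3 x) (g4 x) (clamp_I01 x) eps Heps) as [d0 [Hd0 Hf0]].
  destruct (H1 x d0 Hd0) as [d1 [Hd1 K1]].
  destruct (H2 x d0 Hd0) as [d2 [Hd2 K2]].
  destruct (H3 x d0 Hd0) as [d3 [Hd3 K3]].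
  destruct (H4 x d0 Hd0) as [d4 [Hd4 K4]].
  exists (Rmin d0 (Rmin d1 (Rmin d2 (Rmin d3 d4)))). split.
  { repeat apply Rmin_pos; auto. }
  intros y Hy.
  assert (Rabs (y - x) < d0) by (eapply Rlt_le_trans; [exact Hy|]; apply Rmin_l).
  assert (Hy1 : Rabs (y - x) < Rmin d1 (Rmin d2 (Rmin d3 d4))) by (eapply Rlt_le_trans; [exact Hy|]; apply Rmin_r).
  assert (Rabs (y - x) < d1) by (eapply Rlt_le_trans; [exact Hy1|]; apply Rmin_l).
  assert (Hy2 : Rabs (y - x) < Rmin d2 (Rmin d3 d4)) by (eapply Rlt_le_trans; [exact Hy1|]; apply Rmin_r).
  assert (Rabs (y - x) < d2) by (eapply Rlt_le_trans; [exact Hy2|]; apply Rmin_l).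
  assert (Hy3 : Rabs (y - x) < Rmin d3 d4) by (eapply Rlt_le_trans; [exact Hy2|]; apply Rmin_r).
  assert (Rabs (y - x) < d3) by (eapply Rlt_le_trans; [exact Hy3|]; apply Rmin_l).
  assert (Rabs (y - x) < d4) by (eapply Rlt_le_trans; [exact Hy3|]; apply Rmin_r).
  apply Hf0; auto. apply clamp_I01. eapply Rle_lt_trans. apply clamp_lip. auto.
Qed.

Lemma Tf_ctn f ph : cont_f f -> ctn ph -> ctn (Tf f ph).
Proof.
  intros Hf H. unfold Tf.
  apply (comp_ctn f (fun t => U0 ph (clamp t)) (fun t => U1 ph (clamp t))
                    (fun t => U2 ph (clamp t)) (fun t => U3 ph (clamp t))); auto;
  apply ctn_comp_clamp.
  - apply (derive_ctn (U0 ph) (U1 ph)). intros; apply U0_deriv; auto.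
  - apply (derive_ctn (U1 ph) (U2 ph)). intros; apply U1_deriv; auto.
  - apply (derive_ctn (U2 ph) (U3 ph)). intros; apply U2_deriv; auto.
  - apply (derive_ctn (U3 ph) ph). intros; apply U3_deriv; auto.
Qed.

Lemma sqrt3_bound : 72 * sqrt 3 <= 128.
Proof.
  assert (sqrt 3 <= 16/9).
  { rewrite <- (sqrt_pow2 (16/9)) by lra. apply sqrt_le_1_alt. lra. }
  lra.
Qed.

Lemma div_sqrt3 M : 0 < M -> M / 128 <= M / (72 * sqrt 3).
Proof.
  intros HM. pose proof sqrt3_bound. assert (0 < sqrt 3) by (apply sqrt_lt_R0; lra).
  unfold Rdiv. apply Rmult_le_compat_l. lra. apply Rinv_le_contravar. lra. lra.
Qed.

Definition Ball (m : R) (ph : R -> R) := ctn ph /\ forall t, Rabs (ph t) <= m.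

Lemma Ball_DM M ph x : 0 < M -> Ball (M/2) ph -> I01 x ->
  DM M x (U0 ph x) (U1 ph x) (U2 ph x) (U3 ph x).
Proof.
  intros HM [Hc Hb] Hx.
  assert (Hd : forall t, 0 <= t <= 1 -> Rabs (ph t) <= M/2) by auto.
  pose proof (U0_bound ph (M/2) x Hc Hd Hx).
  pose proof (U1_bound ph (M/2) x Hc Hd Hx).
  pose proof (U2_bound ph (M/2) x Hc Hd Hx).
  pose proof (U3_bound ph (M/2) x Hc Hd Hx).
  pose proof (div_sqrt3 M HM).
  unfold DM. repeat split; try (apply Hx); lra.
Qed.

Lemma T_ball f M ph : cont_f f -> 0 < M ->
  (forall x u y v z, DM M x u y v z -> Rabs (f x u y v z) <= M / 2) ->
  Ball (M/2) ph -> Ball (M/2) (Tf f ph).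
Proof.
  intros Hf HM Hb HB. split.
  - apply Tf_ctn; auto. apply HB.
  - intros t. unfold Tf. apply Hb. apply Ball_DM; auto. apply clamp_I01.
Qed.

Lemma T_contr f M K1 K2 K3 K4 ph ps d : 0 < M ->
  0 <= K1 -> 0 <= K2 -> 0 <= K3 -> 0 <= K4 ->
  (forall x u1 y1 v1 z1 u2 y2 v2 z2,
     DM M x u1 y1 v1 z1 -> DM M x u2 y2 v2 z2 ->
     Rabs (f x u2 y2 v2 z2 - f x u1 y1 v1 z1) <=
       K1 * Rabs (u2 - u1) + K2 * Rabs (y2 - y1) +
       K3 * Rabs (v2 - v1) + K4 * Rabs (z2 - z1)) ->
  Ball (M/2) ph -> Ball (M/2) ps -> (forall t, 0 <= t <= 1 -> Rabs (ph t - ps t) <= d) ->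
  forall x, Rabs (Tf f ph x - Tf f ps x) <= (K1/384 + K2/64 + 2*K3 + K4) * d.
Proof.
  intros HM HK1 HK2 HK3 HK4 HL Hph Hps Hd x. unfold Tf.
  set (y := clamp x). assert (Hy : I01 y) by apply clamp_I01.
  eapply Rle_trans. apply HL; apply Ball_DM; auto.
  destruct Hph as [Hph _]. destruct Hps as [Hps _].
  pose proof (U0_diff ph ps d y Hph Hps Hd Hy).
  pose proof (U1_diff ph ps d y Hph Hps Hd Hy).
  pose proof (U2_diff ph ps d y Hph Hps Hd Hy).
  pose proof (U3_diff ph ps d y Hph Hps Hd Hy).
  assert (K1 * Rabs (U0 ph y - U0 ps y) <= K1 * (d/384)) by (apply Rmult_le_compat_l; auto).
  assert (K2 * Rabs (U1 ph y - U1 ps y) <= K2 * (d/64)) by (apply Rmult_le_compat_l; auto).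
  assert (K3 * Rabs (U2 ph y - U2 ps y) <= K3 * (2*d)) by (apply Rmult_le_compat_l; auto).
  assert (K4 * Rabs (U3 ph y - U3 ps y) <= K4 * (1*d)) by (apply Rmult_le_compat_l; auto).
  lra.
Qed.

Fixpoint pic (f : R -> R -> R -> R -> R -> R) (n : nat) : R -> R :=
  match n with O => fun _ => 0 | S k => Tf f (pic f k) end.

Lemma small_pow (L c eps : R) : 0 <= L < 1 -> 0 < c -> 0 < eps -> exists N, forall n, (n >= N)%nat -> c * L ^ n < eps.
Proof.
  intros HL Hc He.
  assert (Ha : Rabs L < 1) by (rewrite Rabs_pos_eq; lra).
  destruct (pow_lt_1_zero L Ha (eps / c)) as [N HN]. apply Rdiv_lt_0_compat; auto.
  exists N. intros n Hn. specialize (HN n Hn). rewrite Rabs_pos_eq in HN by (apply pow_le; lra).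
  apply Rmult_lt_reg_l with (/ c). apply Rinv_0_lt_compat; auto.
  rewrite <- Rmult_assoc, Rinv_l, Rmult_1_l by lra. unfold Rdiv in HN. lra.
Qed.

Lemma zero_of_small (a L c : R) : 0 <= L < 1 -> 0 <= c -> (forall n, Rabs a <= c * L ^ n) -> a = 0.
Proof.
  intros HL Hc H.
  destruct (Req_dec a 0) as [|Hne]; auto. exfalso.
  assert (Hp : 0 < Rabs a) by (apply Rabs_pos_lt; auto).
  destruct (Req_dec c 0) as [->|Hc0].
  { specialize (H O). lra. }
  destruct (small_pow L c (Rabs a) HL ltac:(lra) Hp) as [N HN].
  specialize (HN N (le_n N)). specialize (H N). lra.
Qed.

Lemma fixed_point f M K1 K2 K3 K4 : cont_f f -> 0 < M ->
  (forall x u y v z, DM M x u y v z -> Rabs (f x u y v z) <= M / 2) ->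
  0 <= K1 -> 0 <= K2 -> 0 <= K3 -> 0 <= K4 ->
  (forall x u1 y1 v1 z1 u2 y2 v2 z2,
     DM M x u1 y1 v1 z1 -> DM M x u2 y2 v2 z2 ->
     Rabs (f x u2 y2 v2 z2 - f x u1 y1 v1 z1) <=
       K1 * Rabs (u2 - u1) + K2 * Rabs (y2 - y1) +
       K3 * Rabs (v2 - v1) + K4 * Rabs (z2 - z1)) ->
  K1/384 + K2/64 + 2*K3 + K4 < 1 ->
  exists phs, Ball (M/2) phs /\ (forall t, Tf f phs t = phs t) /\
    (forall ch, Ball (M/2) ch -> (forall t, Tf f ch t = ch t) -> forall t, ch t = phs t).
Proof.
  intros Hf HM Hb HK1 HK2 HK3 HK4 HLip HL1.
  set (L := K1/384 + K2/64 + 2*K3 + K4) in *.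
  set (m := M/2).
  assert (HL : 0 <= L < 1) by (unfold L; split; [|exact HL1]; lra).
  assert (Hm : 0 < m) by (unfold m; lra).
  assert (Hcontr := fun ph ps d => T_contr f M K1 K2 K3 K4 ph ps d HM HK1 HK2 HK3 HK4 HLip).
  fold L in Hcontr.
  assert (Hball : forall n, Ball m (pic f n)).
  { induction n as [|n IH]; simpl.
    - split. intros x eps He. exists 1. split. lra. intros. rewrite Rminus_eq_0, Rabs_R0. auto.
      intros. rewrite Rabs_R0. lra.
    - apply T_ball; auto. }
  assert (Hstep : forall n t, Rabs (pic f (S n) t - pic f n t) <= 2 * m * L ^ n).
  { induction n as [|n IH]; intros t.
    - simpl. rewrite Rminus_0_r. destruct (Hball 1%nat) as [_ Hb1]. simpl in Hb1.
      specialize (Hb1 t). lra.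
    - change (pic f (S (S n)) t) with (Tf f (pic f (S n)) t).
      change (pic f (S n) t) with (Tf f (pic f n) t).
      eapply Rle_trans. apply (Hcontr _ _ (2 * m * L ^ n)); auto.
      simpl. right. ring. }
  set (E := fun n => 2 * m * L ^ n / (1 - L)).
  assert (Hcau : forall n p t, Rabs (pic f (n + p) t - pic f n t) <= 2 * m * (L ^ n - L ^ (n + p)) / (1 - L)).
  { intros n p t. induction p as [|p IH].
    - rewrite Nat.add_0_r, Rminus_eq_0, Rabs_R0. unfold Rdiv. rewrite Rminus_eq_0. lra.
    - replace (n + S p)%nat with (S (n + p)) by lia.
      eapply Rle_trans. 
      replace (pic f (S (n + p)) t - pic f n t) with ((pic f (S (n + p)) t - pic f (n + p) t) + (pic f (n + p) t - pic f n t)) by ring.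
      apply Rabs_triang.
      eapply Rle_trans. apply Rplus_le_compat. apply Hstep. apply IH.
      right. simpl. field. lra. }
  assert (Hcau2 : forall n p t, Rabs (pic f (n + p) t - pic f n t) <= E n).
  { intros n p t. eapply Rle_trans. apply Hcau. unfold E.
    unfold Rdiv. apply Rmult_le_compat_r. apply Rlt_le, Rinv_0_lt_compat. lra.
    assert (0 <= L ^ (n + p)) by (apply pow_le; lra).
    assert (0 <= 2 * m) by lra. nra. }
  assert (HE0 : forall n, 0 <= E n).
  { intros n. unfold E. apply Rmult_le_pos. apply Rmult_le_pos. lra. apply pow_le; lra.
    apply Rlt_le, Rinv_0_lt_compat. lra. }
  assert (HEsmall : forall eps, 0 < eps -> exists N, forall n, (n >= N)%nat -> E n < eps).
  { intros eps He. destruct (small_pow L (2 * m / (1 - L)) eps HL) as [N HN].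
    apply Rdiv_lt_0_compat; lra. auto.
    exists N. intros n Hn. specialize (HN n Hn). unfold E.
    replace (2 * m * L ^ n / (1 - L)) with (2 * m / (1 - L) * L ^ n) by (field; lra). auto. }
  assert (Hlim : forall t, {l | Un_cv (fun n => pic f n t) l}).
  { intros t. apply Rcomplete.R_complete. intros eps He.
    destruct (HEsmall (eps / 2)) as [N HN]. lra.
    exists N. intros n p Hn Hp. unfold R_dist.
    assert (A1 := Hcau2 N (n - N)%nat t). replace (N + (n - N))%nat with n in A1 by lia.
    assert (A2 := Hcau2 N (p - N)%nat t). replace (N + (p - N))%nat with p in A2 by lia.
    specialize (HN N (le_n N)).
    replace (pic f n t - pic f p t) with ((pic f n t - pic f N t) - (pic f p t - pic f N t)) by ring.
    eapply Rle_lt_trans. apply Rabs_triang. rewrite Rabs_Ropp. lra. }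
  set (phs := fun t => proj1_sig (Hlim t)).
  assert (Herr : forall n t, Rabs (phs t - pic f n t) <= E n).
  { intros n t. apply le_epsilon. intros eps He.
    destruct (proj2_sig (Hlim t) eps He) as [N HN]. fold (phs t) in HN.
    specialize (HN (n + N)%nat ltac:(lia)). unfold R_dist in HN.
    specialize (Hcau2 n N t).
    replace (phs t - pic f n t) with (- (pic f (n + N) t - phs t) + (pic f (n + N) t - pic f n t)) by ring.
    eapply Rle_trans. apply Rabs_triang. rewrite Rabs_Ropp. lra. }
  assert (Hphs_ctn : ctn phs).
  { intros x eps He.
    destruct (HEsmall (eps / 3)) as [N HN]. lra. specialize (HN N (le_n N)).
    destruct (Hball N) as [HcN _].
    destruct (HcN x (eps / 3)) as [d [Hd Hy]]. lra.
    exists d. split; auto. intros y Hyx. specialize (Hy y Hyx).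
    pose proof (Herr N y). pose proof (Herr N x).
    replace (phs y - phs x) with ((phs y - pic f N y) + (pic f N y - pic f N x) - (phs x - pic f N x)) by ring.
    eapply Rle_lt_trans. apply Rabs_triang. rewrite Rabs_Ropp.
    eapply Rle_lt_trans. apply Rplus_le_compat_r. apply Rabs_triang. lra. }
  assert (Hphs_b : forall t, Rabs (phs t) <= m).
  { intros t. apply le_epsilon. intros eps He.
    destruct (HEsmall eps He) as [N HN]. specialize (HN N (le_n N)).
    destruct (Hball N) as [_ HbN]. specialize (HbN t). pose proof (Herr N t).
    replace (phs t) with ((phs t - pic f N t) + pic f N t) by ring.
    eapply Rle_trans. apply Rabs_triang. lra. }
  assert (HB : Ball m phs) by (split; auto).
  assert (Hfixp : forall t, Tf f phs t = phs t).
  { intros t. apply Rminus_diag_uniq.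
    apply (zero_of_small _ L (2 * m / (1 - L) * (L + 1))); auto.
    { apply Rmult_le_pos. apply Rlt_le, Rdiv_lt_0_compat; lra. lra. }
    intros n.
    assert (Hc1 : Rabs (Tf f phs t - Tf f (pic f n) t) <= L * E n).
    { apply Hcontr; auto. }
    pose proof (Herr (S n) t). change (pic f (S n) t) with (Tf f (pic f n) t) in H.
    replace (Tf f phs t - phs t) with ((Tf f phs t - Tf f (pic f n) t) - (phs t - Tf f (pic f n) t)) by ring.
    eapply Rle_trans. apply Rabs_triang. rewrite Rabs_Ropp.
    assert (E (S n) <= E n).
    { unfold E. simpl. unfold Rdiv. apply Rmult_le_compat_r. apply Rlt_le, Rinv_0_lt_compat; lra.
      assert (0 <= L ^ n) by (apply pow_le; lra). assert (0 <= 2*m*L^n*(1-L)) by (repeat apply Rmult_le_pos; lra). lra. }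
    assert (L * E n + E (S n) <= (L + 1) * E n) by lra.
    unfold E in *. 
    replace (2 * m / (1 - L) * (L + 1) * L ^ n) with ((L + 1) * (2 * m * L ^ n / (1 - L))) by (field; lra).
    lra. }
  exists phs. split; [exact HB|split]; [exact Hfixp|].
  intros ch Hch Hfix.
  assert (Hall : forall n s, Rabs (ch s - phs s) <= 2 * m * L ^ n).
  { intros n. induction n as [|n IH]; intros s.
    + destruct Hch as [_ Hc]. specialize (Hc s). pose proof (Hphs_b s). simpl.
      eapply Rle_trans. apply Rabs_triang. rewrite Rabs_Ropp. lra.
    + rewrite <- (Hfix s), <- (Hfixp s).
      eapply Rle_trans. apply Hcontr; auto.
      simpl. right. ring. }
  intros t. apply Rminus_diag_uniq. apply (zero_of_small _ L (2 * m)); auto. lra.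
Qed.

Lemma hd_eq g x l l' : has_deriv_I01 g x l -> l = l' -> has_deriv_I01 g x l'.
Proof. intros H <-; auto. Qed.

Lemma hd_minus g1 g2 x l1 l2 : has_deriv_I01 g1 x l1 -> has_deriv_I01 g2 x l2 ->
  has_deriv_I01 (fun y => g1 y - g2 y) x (l1 - l2).
Proof.
  intros H1 H2 eps Heps.
  destruct (H1 (eps/2) ltac:(lra)) as [d1 [Hd1 K1]].
  destruct (H2 (eps/2) ltac:(lra)) as [d2 [Hd2 K2]].
  exists (Rmin d1 d2). split. apply Rmin_pos; auto.
  intros y Iy Hne Hyx.
  assert (Rabs (y - x) < d1) by (eapply Rlt_le_trans; [exact Hyx|apply Rmin_l]).
  assert (Rabs (y - x) < d2) by (eapply Rlt_le_trans; [exact Hyx|apply Rmin_r]).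
  specialize (K1 y Iy Hne ltac:(auto)). specialize (K2 y Iy Hne ltac:(auto)).
  assert (y - x <> 0) by lra.
  replace ((g1 y - g2 y - (g1 x - g2 x)) / (y - x) - (l1 - l2))
    with (((g1 y - g1 x) / (y - x) - l1) - ((g2 y - g2 x) / (y - x) - l2)) by (field; auto).
  eapply Rle_lt_trans. apply Rabs_triang. rewrite Rabs_Ropp. lra.
Qed.

Lemma zero_deriv_const g : (forall x, I01 x -> cont_I01 g x) ->
  (forall x, 0 < x < 1 -> has_deriv_I01 g x 0) -> forall x, I01 x -> g x = g 0.
Proof.
  intros Hc Hd x Hx.
  set (G := fun t => g (clamp t)).
  assert (HG : ctn G) by (apply ctn_clamp_comp; auto).
  assert (HGd : forall y, 0 < y < 1 -> is_derive G y 0).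
  { intros y Hy. apply hd_derivable; auto.
    intros eps He. destruct (Hd y Hy eps He) as [d [Hdd K]]. exists d; split; auto.
    intros z Iz Hne Hzy. unfold G. rewrite !clamp_id; auto. unfold I01; lra. }
  destruct (MVT_gen G 0 x (fun _ => 0)) as [c [_ Hc']].
  - intros y Hy. apply HGd. unfold I01 in Hx. rewrite Rmin_left in Hy by lra.
    rewrite Rmax_right in Hy by lra. lra.
  - intros y _. apply continuity_pt_filterlim. apply ctn_continuous. auto.
  - unfold G in Hc'. rewrite !clamp_id in Hc' by (auto; unfold I01; lra). lra.
Qed.

Lemma hd_poly (F f : R -> R) x : (forall t, is_derive F t (f t)) -> has_deriv_I01 F x (f x).
Proof. intros H. apply is_derive_hd. auto. Qed.

Lemma lin_unique z z1 z2 z3 :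
  (forall x, I01 x -> has_deriv_I01 z x (z1 x) /\ has_deriv_I01 z1 x (z2 x) /\ has_deriv_I01 z2 x (z3 x)
     /\ cont_I01 z3 x) ->
  (forall x, 0 < x < 1 -> has_deriv_I01 z3 x 0) ->
  z 0 = 0 -> z 1 = 0 -> z1 0 = 0 -> z1 1 = 0 ->
  forall x, I01 x -> z x = 0 /\ z1 x = 0 /\ z2 x = 0 /\ z3 x = 0.
Proof.
  intros H H3 Hz0 Hz1 Hz10 Hz11.
  assert (I0 : I01 0) by (unfold I01; lra).
  assert (I1 : I01 1) by (unfold I01; lra).
  set (A := z3 0).
  assert (E3 : forall x, I01 x -> z3 x = A).
  { apply zero_deriv_const; auto. intros x Hx; apply H; auto. }
  set (B := z2 0).
  assert (E2 : forall x, I01 x -> z2 x = A * x + B).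
  { intros x Hx.
    assert (K : forall y, I01 y -> has_deriv_I01 (fun t => z2 t - A * t) y (z3 y - A)).
    { intros y Hy. apply hd_minus. apply H; auto.
      apply (hd_poly (fun t => A * t) (fun _ => A)). intros; auto_derive; auto; ring. }
    assert (Z := zero_deriv_const (fun t => z2 t - A * t)).
    assert (z2 x - A * x = z2 0 - A * 0).
    { apply Z; auto.
      - intros y Hy. eapply deriv_cont. apply K; auto.
      - intros y Hy. eapply hd_eq. apply K. unfold I01; lra. rewrite E3; [ring|unfold I01; lra]. }
    unfold B. lra. }
  assert (E1 : forall x, I01 x -> z1 x = A * x^2 / 2 + B * x).
  { intros x Hx.
    assert (K : forall y, I01 y -> has_deriv_I01 (fun t => z1 t - (A * t^2/2 + B * t)) y (z2 y - (A * y + B))).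
    { intros y Hy. apply hd_minus. apply H; auto.
      apply (hd_poly (fun t => A * t^2/2 + B * t) (fun t => A * t + B)). intros; auto_derive; auto; field. }
    assert (Z := zero_deriv_const (fun t => z1 t - (A * t^2/2 + B * t))).
    assert (z1 x - (A * x^2/2 + B * x) = z1 0 - (A * 0^2/2 + B * 0)).
    { apply Z; auto.
      - intros y Hy. eapply deriv_cont. apply K; auto.
      - intros y Hy. eapply hd_eq. apply K. unfold I01; lra. rewrite E2; [ring|unfold I01; lra]. }
    rewrite Hz10 in H0. lra. }
  assert (E0 : forall x, I01 x -> z x = A * x^3 / 6 + B * x^2 / 2).
  { intros x Hx.
    assert (K : forall y, I01 y -> has_deriv_I01 (fun t => z t - (A * t^3/6 + B * t^2/2)) y (z1 y - (A * y^2/2 + B * y))).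
    { intros y Hy. apply hd_minus. apply H; auto.
      apply (hd_poly (fun t => A * t^3/6 + B * t^2/2) (fun t => A * t^2/2 + B * t)). intros; auto_derive; auto; field. }
    assert (Z := zero_deriv_const (fun t => z t - (A * t^3/6 + B * t^2/2))).
    assert (z x - (A * x^3/6 + B * x^2/2) = z 0 - (A * 0^3/6 + B * 0^2/2)).
    { apply Z; auto.
      - intros y Hy. eapply deriv_cont. apply K; auto.
      - intros y Hy. eapply hd_eq. apply K. unfold I01; lra. rewrite E1; [ring|unfold I01; lra]. }
    rewrite Hz0 in H0. lra. }
  assert (a1 := E0 1 I1). assert (a2 := E1 1 I1).
  rewrite Hz1 in a1. rewrite Hz11 in a2.
  assert (HA : A = 0) by lra. assert (HB : B = 0) by lra.
  intros x Hx. rewrite E0, E1, E2, E3; auto. rewrite HA, HB. repeat split; field.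
Qed.

Lemma div_sqrt3' K : 0 <= K -> K / 128 <= K / (72 * sqrt 3).
Proof.
  intros HK. pose proof sqrt3_bound. assert (0 < sqrt 3) by (apply sqrt_lt_R0; lra).
  unfold Rdiv. apply Rmult_le_compat_l. lra. apply Rinv_le_contravar. lra. lra.
Qed.

Theorem theorem1 (f : R -> R -> R -> R -> R -> R) (M K1 K2 K3 K4 : R) :
  cont_f f ->
  0 < M ->
  (forall x u y v z, DM M x u y v z -> Rabs (f x u y v z) <= M / 2) ->
  0 <= K1 -> 0 <= K2 -> 0 <= K3 -> 0 <= K4 ->
  (forall x u1 y1 v1 z1 u2 y2 v2 z2,
     DM M x u1 y1 v1 z1 -> DM M x u2 y2 v2 z2 ->
     Rabs (f x u2 y2 v2 z2 - f x u1 y1 v1 z1) <=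
       K1 * Rabs (u2 - u1) + K2 * Rabs (y2 - y1) +
       K3 * Rabs (v2 - v1) + K4 * Rabs (z2 - z1)) ->
  K1 / 384 + K2 / (72 * sqrt 3) + K3 + K4 < 1 / 2 ->
  exists u u1 u2 u3 u4 : R -> R,
    is_solution f u u1 u2 u3 u4 /\ sol_bounds M u u1 u2 u3 /\
    (forall w w1 w2 w3 w4 : R -> R,
       is_solution f w w1 w2 w3 w4 -> sol_bounds M w w1 w2 w3 ->
       forall x, I01 x -> w x = u x).
Proof.
  intros Hf HM Hb HK1 HK2 HK3 HK4 HLip Hq.
  assert (HL : K1/384 + K2/64 + 2*K3 + K4 < 1).
  { pose proof (div_sqrt3' K2 HK2). lra. }
  destruct (fixed_point f M K1 K2 K3 K4 Hf HM Hb HK1 HK2 HK3 HK4 HLip HL) as [phs [HB [Hfix Huniq]]].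
  destruct HB as [Hc Hbd].
  assert (Hd : forall t, 0 <= t <= 1 -> Rabs (phs t) <= M/2) by auto.
  exists (U0 phs), (U1 phs), (U2 phs), (U3 phs), phs.
  split; [|split].
  - split; [|split; [|split; [|split; [|split]]]].
    + intros x Hx. repeat split.
      * apply is_derive_hd, U0_deriv; auto.
      * apply is_derive_hd, U1_deriv; auto.
      * apply is_derive_hd, U2_deriv; auto.
      * apply is_derive_hd, U3_deriv; auto.
      * intros eps He. destruct (Hc x eps He) as [d [Hdd K]]. exists d; split; auto.
    + intros x Hx. rewrite <- (Hfix x). unfold Tf. rewrite clamp_id; auto. unfold I01; lra.
    + apply U0_at0.
    + apply U0_at1.
    + apply U1_at0.
    + apply U1_at1.
  - intros x Hx.
    pose proof (U0_bound phs (M/2) x Hc Hd Hx).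
    pose proof (U1_bound phs (M/2) x Hc Hd Hx).
    pose proof (U2_bound phs (M/2) x Hc Hd Hx).
    pose proof (U3_bound phs (M/2) x Hc Hd Hx).
    pose proof (div_sqrt3 M HM).
    repeat split; lra.
  - intros w w1 w2 w3 w4 [HC4 [Hode [Hw0 [Hw1 [Hw10 Hw11]]]]] Hwb.
    set (ch := fun t => f (clamp t) (w (clamp t)) (w1 (clamp t)) (w2 (clamp t)) (w3 (clamp t))).
    assert (Hcont : forall g g', (forall x, I01 x -> has_deriv_I01 g x (g' x)) -> ctn (fun t => g (clamp t))).
    { intros g g' Hg. apply ctn_clamp_comp. intros x Hx. eapply deriv_cont. apply Hg; auto. }
    assert (Hch : ctn ch).
    { apply comp_ctn; auto.
      - apply (Hcont w w1). intros x Hx; apply HC4; auto.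
      - apply (Hcont w1 w2). intros x Hx; apply HC4; auto.
      - apply (Hcont w2 w3). intros x Hx; apply HC4; auto.
      - apply (Hcont w3 w4). intros x Hx; apply HC4; auto. }
    assert (Hchb : forall t, Rabs (ch t) <= M / 2).
    { intros t. unfold ch. apply Hb. destruct (Hwb (clamp t) (clamp_I01 t)) as [b0 [b1 [b2 b3]]].
      pose proof (clamp_I01 t) as Ht. unfold I01 in Ht.
      unfold DM. repeat split; auto; lra. }
    assert (Hlin := lin_unique (fun t => w t - U0 ch t) (fun t => w1 t - U1 ch t)
                       (fun t => w2 t - U2 ch t) (fun t => w3 t - U3 ch t)).
    assert (Heq : forall x, I01 x -> w x - U0 ch x = 0 /\ w1 x - U1 ch x = 0 /\
                                     w2 x - U2 ch x = 0 /\ w3 x - U3 ch x = 0).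
    { apply Hlin.
      - intros x Hx. destruct (HC4 x Hx) as [D0 [D1 [D2 [D3 _]]]]. repeat split.
        + apply hd_minus; auto. apply is_derive_hd, U0_deriv; auto.
        + apply hd_minus; auto. apply is_derive_hd, U1_deriv; auto.
        + apply hd_minus; auto. apply is_derive_hd, U2_deriv; auto.
        + eapply deriv_cont. apply hd_minus. exact D3. apply is_derive_hd, U3_deriv; auto.
      - intros x Hx. assert (Ix : I01 x) by (unfold I01; lra).
        destruct (HC4 x Ix) as [_ [_ [_ [D3 _]]]].
        eapply hd_eq. apply hd_minus. exact D3. apply is_derive_hd, U3_deriv; auto.
        rewrite (Hode x Hx). unfold ch. rewrite clamp_id; auto. ring.
      - rewrite Hw0, U0_at0. ring.
      - rewrite Hw1, U0_at1. ring.
      - rewrite Hw10, U1_at0. ring.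
      - rewrite Hw11, U1_at1. ring. }
    assert (Hfixch : forall t, Tf f ch t = ch t).
    { intros t. unfold Tf. destruct (Heq (clamp t) (clamp_I01 t)) as [e0 [e1 [e2 e3]]].
      cbv beta in e0, e1, e2, e3.
      replace (U0 ch (clamp t)) with (w (clamp t)) by lra.
      replace (U1 ch (clamp t)) with (w1 (clamp t)) by lra.
      replace (U2 ch (clamp t)) with (w2 (clamp t)) by lra.
      replace (U3 ch (clamp t)) with (w3 (clamp t)) by lra.
      reflexivity. }
    assert (Hchphs : ch = phs).
    { apply functional_extensionality. apply Huniq; auto. split; auto. }
    intros x Hx. destruct (Heq x Hx) as [e0 _]. cbv beta in e0. rewrite <- Hchphs. lra.
Qed.
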